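(* Let $p\ge1$, let $A:\mathbb{R}\to\mathbb{R}$, and let $\boldsymbol{x},\boldsymbol{w}\in\mathbb{R}^p$ be such that $x_jw_j\neq0$ for some $j$. For $\tau\in(0,1)$ and $c\in(0,+\infty)$ define $\theta=\boldsymbol{w}^T\boldsymbol{x}$, $s_j=\mathrm{sgn}(w_j)$ (with $\mathrm{sgn}(0)=0$), $q_j=x_j(w_j+cs_j)$, $\theta_{j-}=\theta-q_j$, $\theta_{j+}=\theta+\frac{\tau}{1-\tau}q_j$, and $$\pi(\boldsymbol{w})=\pi_{\tau,c}(\boldsymbol{w})=\tau\sum_{j=1}^{p}A(\theta_{j-})+(1-\tau)\sum_{j=1}^{p}A(\theta_{j+})-pA(\theta).$$ Then: (i) if $A$ is convex, $\pi(\boldsymbol{w})$ is monotonically increasing as a function of $\tau\in(0,1)$ (for fixed $c$); (ii) if $A$ is twice differentiable with $A''(\theta)>0$ for all $\theta$, then $\pi(\boldsymbol{w})$ is monotonically increasing as a function of $c\in(0,+\infty)$ (for fixed $\tau$).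
   Context: $\pi$ is the Shakeout regularizer of a generalized linear model with log-partition function $A$, Shakeout hyper-parameters $\tau$ and $c$, and feature vector $\boldsymbol{x}$. *)

(* Defs.v *)
From Stdlib Require Import Reals.
From Coquelicot Require Import Coquelicot.
Open Scope R_scope.

Definition sgn (t : R) : R :=
  if Rlt_dec 0 t then 1 else if Rlt_dec t 0 then -1 else 0.

Definition convex_fun (A : R -> R) : Prop :=
  forall (a b t : R), 0 <= t <= 1 ->
    A (t * a + (1 - t) * b) <= t * A a + (1 - t) * A b.

(* vectors in R^p are functions nat -> R, coordinates j = 0, ..., p-1;
   sum over j = 0..p-1 (for p >= 1) is sum_f_R0 f (p - 1) *)
Definition sum_p (p : nat) (f : nat -> R) : R := sum_f_R0 f (p - 1).

Definition theta (p : nat) (x w : nat -> R) : R := sum_p p (fun j => w j * x j).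

Definition qj (c : R) (x w : nat -> R) (j : nat) : R := x j * (w j + c * sgn (w j)).

Definition theta_minus (p : nat) (c : R) (x w : nat -> R) (j : nat) : R :=
  theta p x w - qj c x w j.

Definition theta_plus (p : nat) (tau c : R) (x w : nat -> R) (j : nat) : R :=
  theta p x w + tau / (1 - tau) * qj c x w j.

Definition shakeout_pi (A : R -> R) (p : nat) (tau c : R) (x w : nat -> R) : R :=
  tau * sum_p p (fun j => A (theta_minus p c x w j))
  + (1 - tau) * sum_p p (fun j => A (theta_plus p tau c x w j))
  - INR p * A (theta p x w).

(* Main.v *)
Require Import Defs.
From Stdlib Require Import Reals Lra Lia.
From Coquelicot Require Import Coquelicot.
Open Scope R_scope.

Lemma comb N f g t : t * sum_f_R0 f N + (1-t)*sum_f_R0 g N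
  = sum_f_R0 (fun j => t*f j + (1-t)*g j) N.
Proof. induction N; simpl. ring. rewrite <- IHN. ring. Qed.

Lemma sum_lt (f g : nat -> R) N : (forall n, (n <= N)%nat -> f n <= g n) ->
  (exists j, (j <= N)%nat /\ f j < g j) -> sum_f_R0 f N < sum_f_R0 g N.
Proof.
  induction N; intros H [j [Hj Hs]].
  - simpl. assert (j = 0)%nat by lia. subst. exact Hs.
  - simpl. destruct (Nat.eq_dec j (S N)).
    + subst. apply Rplus_le_lt_compat; auto.
      apply sum_Rle. intros; apply H; lia.
    + apply Rplus_lt_le_compat; auto.
      apply IHN. intros; apply H; lia. exists j; split; auto; lia.
Qed.

Lemma term_tau A (HC : convex_fun A) th q t1 t2 : 0 < t1 -> t1 <= t2 -> t2 < 1 ->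
  t1*A(th-q) + (1-t1)*A(th + t1/(1-t1)*q) <= t2*A(th-q) + (1-t2)*A(th+t2/(1-t2)*q).
Proof.
  intros h1 h12 h2.
  set (al := A (th - q)). set (b2 := A (th + t2/(1-t2)*q)).
  set (b1 := A (th + t1/(1-t1)*q)). set (ga := A th).
  assert (J : ga <= t2*al + (1-t2)*b2).
  { pose proof (HC (th-q) (th + t2/(1-t2)*q) t2 ltac:(lra)) as H.
    replace (t2 * (th - q) + (1 - t2) * (th + t2 / (1 - t2) * q)) with th in H
      by (field; lra). exact H. }
  set (r := t1*(1-t2)/((1-t1)*t2)).
  assert (hr0 : 0 <= r). { unfold r. apply Rmult_le_pos. nra.
    apply Rlt_le, Rinv_0_lt_compat. nra. }
  assert (hr1 : r <= 1). { unfold r. apply Rmult_le_reg_r with ((1-t1)*t2). nra.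
    unfold Rdiv. rewrite Rmult_assoc, Rinv_l by nra. nra. }
  assert (S : b1 <= r*b2 + (1-r)*ga).
  { pose proof (HC (th + t2/(1-t2)*q) th r ltac:(lra)) as H.
    replace (r * (th + t2 / (1 - t2) * q) + (1 - r) * th) with (th + t1/(1-t1)*q) in H
      by (unfold r; field; lra). exact H. }
  assert (E : (1-t1)*r = t1*(1-t2)/t2) by (unfold r; field; lra).
  assert (S' : (1-t1)*b1 <= (1-t1)*r*b2 + (1-t1)*(1-r)*ga).
  { replace ((1-t1)*r*b2 + (1-t1)*(1-r)*ga) with ((1-t1)*(r*b2 + (1-r)*ga)) by ring.
    apply Rmult_le_compat_l; lra. }
  assert (E2 : (1-t1)*(1-r) = 1 - t1/t2) by (unfold r; field; lra).
  rewrite E2, E in S'.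
  set (k := t1/t2).
  assert (Ek : t1*(1-t2)/t2 = k*(1-t2)) by (unfold k; field; lra).
  assert (Ek2 : t1 = k*t2) by (unfold k; field; lra).
  assert (hk : 0 < k <= 1). { unfold k. split. apply Rdiv_lt_0_compat; lra.
    apply Rmult_le_reg_r with t2. lra. unfold Rdiv. rewrite Rmult_assoc, Rinv_l by lra. lra. }
  rewrite Ek in S'. rewrite Ek2 in S' |- *.
  assert ((1-k)*(ga - (t2*al + (1-t2)*b2)) <= 0).
  { assert (0 <= 1-k) by lra. nra. }
  replace (k * t2 / t2) with k in S' by (field; lra).
  apply Rle_trans with (k*t2*al + (k*(1-t2)*b2 + (1-k)*ga)). lra.
  apply Rminus_le. replace (k * t2 * al + (k * (1 - t2) * b2 + (1 - k) * ga) -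
   (t2 * al + (1 - t2) * b2)) with ((1-k)*(ga - (t2*al + (1-t2)*b2))) by ring. exact H.
Qed.

Section S2.
Variable A : R -> R.
Hypothesis hd1 : forall t, ex_derive A t.
Hypothesis hd2 : forall t, ex_derive (Derive A) t.
Hypothesis hpos : forall t, 0 < Derive (Derive A) t.

Lemma dmono x y : x < y -> Derive A x < Derive A y.
Proof.
  intro h. destruct (MVT_cor2 (Derive A) (Derive (Derive A)) x y h) as [c [Hc _]].
  { intros c _. apply is_derive_Reals. apply Derive_correct. apply hd2. }
  pose proof (hpos c). nra.
Qed.

Lemma strict_lt a b t : a < b -> 0 < t < 1 ->
  A (t*a + (1-t)*b) < t * A a + (1-t) * A b.
Proof.
  intros hab ht. set (m := t*a + (1-t)*b).
  assert (ham : a < m) by (unfold m; nra).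
  assert (hmb : m < b) by (unfold m; nra).
  assert (HD : forall c, derivable_pt_lim A c (Derive A c)).
  { intros c. apply is_derive_Reals. apply Derive_correct. apply hd1. }
  destruct (MVT_cor2 A (Derive A) a m ham (fun c _ => HD c)) as [c1 [H1 Hc1]].
  destruct (MVT_cor2 A (Derive A) m b hmb (fun c _ => HD c)) as [c2 [H2 Hc2]].
  assert (hd : Derive A c1 < Derive A c2) by (apply dmono; lra).
  assert (E : t * A a + (1-t) * A b - A m =
     t*(1-t)*(b-a)*(Derive A c2 - Derive A c1)).
  { replace (A a) with (A m - Derive A c1 * (m - a)) by lra.
    replace (A b) with (A m + Derive A c2 * (b - m)) by lra.
    unfold m; ring. }
  assert (0 < t*(1-t)*(b-a)*(Derive A c2 - Derive A c1)).
  { apply Rmult_lt_0_compat; [|lra]. apply Rmult_lt_0_compat; [|lra]. nra. }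
  lra.
Qed.

Lemma strict a b t : a <> b -> 0 < t < 1 ->
  A (t*a + (1-t)*b) < t * A a + (1-t) * A b.
Proof.
  intros hab ht. destruct (Rlt_or_le a b). apply strict_lt; lra.
  pose proof (strict_lt b a (1-t) ltac:(lra) ltac:(lra)).
  replace (t*a + (1-t)*b) with ((1-t)*b + (1-(1-t))*a) by ring. lra.
Qed.

Lemma conv : convex_fun A.
Proof.
  intros a b t ht. destruct (Req_dec a b).
  - subst. replace (t*b + (1-t)*b) with b by ring. lra.
  - destruct (Req_dec t 0). subst. replace (0*a+(1-0)*b) with b by ring. lra.
    destruct (Req_dec t 1). subst. replace (1*a+(1-1)*b) with a by ring. lra.
    apply Rlt_le, strict; auto; lra.
Qed.

Definition gfun th tau q := tau*A(th - q) + (1-tau)*A(th + tau/(1-tau)*q).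

Lemma g_chord th tau q lam : 0 < tau < 1 -> 0 <= lam <= 1 ->
  gfun th tau (lam*q) <= lam * gfun th tau q + (1-lam) * A th.
Proof.
  intros ht hl. unfold gfun.
  pose proof (conv (th-q) th lam hl) as H1.
  pose proof (conv (th + tau/(1-tau)*q) th lam hl) as H2.
  replace (lam*(th-q) + (1-lam)*th) with (th - lam*q) in H1 by ring.
  replace (lam*(th + tau/(1-tau)*q) + (1-lam)*th) with (th + tau/(1-tau)*(lam*q)) in H2 by ring.
  assert (tau * A (th - lam*q) <= tau * (lam * A (th - q) + (1 - lam) * A th))
    by (apply Rmult_le_compat_l; lra).
  assert ((1-tau) * A (th + tau/(1-tau)*(lam*q)) <=
          (1-tau) * (lam * A (th + tau/(1-tau)*q) + (1 - lam) * A th))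
    by (apply Rmult_le_compat_l; lra).
  lra.
Qed.

Lemma g_jensen th tau q : 0 < tau < 1 -> q <> 0 -> A th < gfun th tau q.
Proof.
  intros ht hq. unfold gfun.
  assert (th - q <> th + tau/(1-tau)*q).
  { intro E. apply hq. assert (E2: (1 + tau/(1-tau)) * q = 0) by lra.
    apply Rmult_integral in E2. destruct E2 as [E2|]; auto.
    assert (0 < tau/(1-tau)) by (apply Rdiv_lt_0_compat; lra). lra. }
  pose proof (strict _ _ tau H ht) as Hs.
  replace (tau * (th - q) + (1 - tau) * (th + tau / (1 - tau) * q)) with th in Hs
    by (field; lra). exact Hs.
Qed.

Lemma g_jensen_w th tau q : 0 < tau < 1 -> A th <= gfun th tau q.
Proof.
  intros ht. destruct (Req_dec q 0).
  - subst. unfold gfun. replace (th - 0) with th by ring.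
    replace (th + tau/(1-tau)*0) with th by ring. lra.
  - apply Rlt_le, g_jensen; auto.
Qed.

Lemma g_le th tau q lam : 0 < tau < 1 -> 0 <= lam <= 1 ->
  gfun th tau (lam*q) <= gfun th tau q.
Proof.
  intros ht hl. pose proof (g_chord th tau q lam ht hl).
  pose proof (g_jensen_w th tau q ht). nra.
Qed.

Lemma g_lt th tau q lam : 0 < tau < 1 -> 0 <= lam < 1 -> q <> 0 ->
  gfun th tau (lam*q) < gfun th tau q.
Proof.
  intros ht hl hq. pose proof (g_chord th tau q lam ht ltac:(lra)).
  pose proof (g_jensen th tau q ht hq). nra.
Qed.
End S2.

Lemma q_rel c1 c2 x w j : 0 < c1 -> c1 < c2 -> exists lam, 0 <= lam <= 1 /\
  qj c1 x w j = lam * qj c2 x w j /\ (x j * w j <> 0 -> lam < 1 /\ qj c2 x w j <> 0).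
Proof.
  intros h1 h2. unfold qj, sgn.
  destruct (Rlt_dec 0 (w j)).
  - exists ((w j + c1)/(w j + c2)). split; [split|split].
    + apply Rlt_le, Rdiv_lt_0_compat; lra.
    + apply Rmult_le_reg_r with (w j + c2). lra. unfold Rdiv.
      rewrite Rmult_assoc, Rinv_l by lra. lra.
    + field. lra.
    + intro hxw. split.
      * apply Rmult_lt_reg_r with (w j + c2). lra. unfold Rdiv.
        rewrite Rmult_assoc, Rinv_l by lra. lra.
      * intro E. apply Rmult_integral in E. destruct E; [|lra]. apply hxw. rewrite H. ring.
  - destruct (Rlt_dec (w j) 0).
    + exists ((c1 - w j)/(c2 - w j)). split; [split|split].
      * apply Rlt_le, Rdiv_lt_0_compat; lra.
      * apply Rmult_le_reg_r with (c2 - w j). lra. unfold Rdiv.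
        rewrite Rmult_assoc, Rinv_l by lra. lra.
      * field. lra.
      * intro hxw. split.
        -- apply Rmult_lt_reg_r with (c2 - w j). lra. unfold Rdiv.
           rewrite Rmult_assoc, Rinv_l by lra. lra.
        -- intro E. apply Rmult_integral in E. destruct E; [|lra]. apply hxw. rewrite H. ring.
    + assert (w j = 0) by lra. exists 1. split; [lra|split].
      * ring.
      * intro hxw. exfalso. apply hxw. rewrite H. ring.
Qed.

Theorem proposition3 (p : nat) (A : R -> R) (x w : nat -> R)
  (hp : (1 <= p)%nat)
  (hxw : exists j, (j < p)%nat /\ x j * w j <> 0) :
  (* (i) convex A: pi is nondecreasing in tau on (0,1), for every fixed c > 0 *)
  (convex_fun A ->
     forall c, 0 < c ->
     forall tau1 tau2, 0 < tau1 -> tau1 <= tau2 -> tau2 < 1 ->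
       shakeout_pi A p tau1 c x w <= shakeout_pi A p tau2 c x w)
  /\
  (* (ii) A twice differentiable with A'' > 0: pi is strictly increasing in c on (0,+oo),
     for every fixed tau in (0,1) *)
  ((forall t, ex_derive A t) ->
   (forall t, ex_derive (Derive A) t) ->
   (forall t, 0 < Derive (Derive A) t) ->
     forall tau, 0 < tau < 1 ->
     forall c1 c2, 0 < c1 -> c1 < c2 ->
       shakeout_pi A p tau c1 x w < shakeout_pi A p tau c2 x w).
Proof.
  split.
  - intros HC c hc t1 t2 h1 h12 h2. unfold shakeout_pi, sum_p. rewrite !comb.
    unfold Rminus at 1 3. apply Rplus_le_compat_r.
    apply sum_Rle. intros n _. unfold theta_minus, theta_plus.
    apply term_tau; auto.
  - intros hd1 hd2 hpos tau ht c1 c2 hc1 hc2. unfold shakeout_pi, sum_p. rewrite !comb.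
    unfold Rminus at 1 3. apply Rplus_lt_compat_r.
    destruct hxw as [j0 [hj0 hxw0]].
    apply sum_lt.
    + intros n _. unfold theta_minus, theta_plus.
      destruct (q_rel c1 c2 x w n hc1 hc2) as [lam [hl [E _]]].
      rewrite E. apply (g_le A hd1 hd2 hpos); auto.
    + exists j0. split. lia. unfold theta_minus, theta_plus.
      destruct (q_rel c1 c2 x w j0 hc1 hc2) as [lam [hl [E H]]].
      destruct (H hxw0). rewrite E. apply (g_lt A hd1 hd2 hpos); auto. lra.
Qed.
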